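(* Let $A\in\mathcal{B}(p)$ (defined in the context). Then $A\succ 0$ if and only if $\phi(A)\succ 0$, where explicitly $$\phi(A)=\begin{pmatrix}\alpha_1 & c_{1,2} & \cdots & c_{1,p}\\ c_{1,2} & \alpha_2 & \ddots & \vdots\\ \vdots & \ddots & \ddots & c_{p-1,p}\\ c_{1,p} & \cdots & c_{p-1,p} & \alpha_p\end{pmatrix},\qquad \alpha_k=\frac{1}{n_k}+\frac{n_k-1}{n_k}b_k .$$
   Context: All matrices are real; $\succ 0$ means symmetric positive definite. $J_m$ is the $m\times m$ matrix of ones, $J_{m,q}=\mathbf 1_m\mathbf 1_q^\top$. For integers $p\ge1$ and $n_1,\dots,n_p\ge 1$, $n=\sum_k n_k$, $\mathcal{B}(p)$ is the set of symmetric $n\times n$ block matrices $A=(A_{k,\ell})_{1\le k,\ell\le p}$ (block $A_{k,\ell}$ of size $n_k\times n_\ell$) with diagonal blocks $A_{k,k}=(1-b_k)I_{n_k}+b_kJ_{n_k}$ (ones on the diagonal, $b_k$ off the diagonal) and off-diagonal blocks $A_{k,\ell}=A_{\ell,k}^\top=c_{k,\ell}J_{n_k,n_\ell}$ for $k<\ell$, where all parameters $b_k,c_{k,\ell}$ lie in $]-1,1[$, with the convention $b_k=0$ when $n_k=1$. The block average map $\phi$ sends $A$ to the $p\times p$ matrix $[\phi(A)]_{k,\ell}=\frac{1}{n_kn_\ell}\sum_{i\in G_k,j\in G_\ell}A_{i,j}$, where $G_1$ is the first $n_1$ indices, $G_2$ the next $n_2$, and so on. *)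

(* Defs.v *)
From HB Require Import structures.
From mathcomp Require Import all_boot all_order all_algebra.
Set Implicit Arguments. Unset Strict Implicit. Unset Printing Implicit Defensive.
Import Order.TTheory GRing.Theory Num.Theory.
Local Open Scope ring_scope.

Definition posdef (R : realFieldType) (m : nat) (A : 'M[R]_m) : Prop :=
  A^T = A /\ forall x : 'cV[R]_m, x != 0 -> 0 < (x^T *m A *m x) ord0 ord0.

(* Symmetrised off-diagonal parameter: c_{k,l} for k<l, c_{l,k} for k>l
   (only the values c k l with k < l are ever used). *)
Definition csym (R : Type) (p : nat) (c : 'I_p -> 'I_p -> R) (k l : 'I_p) : R :=
  if (k < l)%N then c k l else c l k.

(* The block matrix of B(p) with parameters b, c and block sizes n_:
   diagonal block k = (1-b_k) I + b_k J (ones on the diagonal, b_k off it),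
   off-diagonal block (k,l) = c_{k,l} J (with c_{l,k} := c_{k,l} for l<k). *)
Definition Bmat (R : realFieldType) (p : nat) (n_ : 'I_p -> nat)
    (b : 'I_p -> R) (c : 'I_p -> 'I_p -> R) : 'M[R]_(\sum_(k < p) n_ k) :=
  mxblock (fun k l : 'I_p =>
    \matrix_(i < n_ k, j < n_ l)
      (if k == l then (if (i : nat) == j then 1 else b k) else csym c k l)).
Arguments Bmat {R p} n_ b c.

Definition phi (R : realFieldType) (p : nat) (n_ : 'I_p -> nat)
    (A : 'M[R]_(\sum_(k < p) n_ k)) : 'M[R]_p :=
  \matrix_(k, l) (((n_ k)%:R * (n_ l)%:R)^-1 *
     \sum_(i < n_ k) \sum_(j < n_ l) (@submxblock R p p n_ n_ A k l) i j).
Arguments phi {R p} n_ A.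

(* Main.v *)
Require Import Defs.
From HB Require Import structures.
From mathcomp Require Import all_boot all_order all_algebra.
From mathcomp Require Import ring lra.
Import Order.TTheory GRing.Theory Num.Theory.
Set Implicit Arguments. Unset Strict Implicit. Unset Printing Implicit Defensive.
Local Open Scope ring_scope.

Lemma blockE (R : realFieldType) p (n_ : 'I_p -> nat) k (F : 'I_(\sum_(k<p) n_ k) -> R) :
  \sum_(s | @tagnat.sig1 p n_ s == k) F s = \sum_(j < n_ k) F (tagnat.Rank k j).
Proof.
rewrite (reindex (@tagnat.rank p n_)); last exact: (onW_bij _ tagnat.rank_bij).
rewrite (eq_bigl (fun q => tag q == k)); last first.
  by move=> q /=; rewrite tagnat.rankE tagnat.Rank1K.
rewrite (eq_bigr (fun q => F (@tagnat.Rank p n_ (tag q) (tagged q)))); last first.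
  by move=> q _; rewrite tagnat.rankE.
have := @sig_big_dep R 0 +%R _ _ (fun i => i == k) (fun _ _ => true) (fun i (j : 'I_(n_ i)) => F (@tagnat.Rank p n_ i j)).
rewrite big_pred1_eq /= => H.
rewrite H; by apply: eq_bigl => q; rewrite andbT.
Qed.

Lemma cntE (R : realFieldType) p (n_ : 'I_p -> nat) k (a : R) :
  \sum_(s | @tagnat.sig1 p n_ s == k) a = a *+ n_ k.
Proof. by rewrite blockE sumr_const card_ord. Qed.

Lemma groupE (R : realFieldType) p (n_ : 'I_p -> nat) (F : 'I_(\sum_(k<p) n_ k) -> R) :
  \sum_s F s = \sum_k \sum_(s | @tagnat.sig1 p n_ s == k) F s.
Proof. by rewrite (partition_big (@tagnat.sig1 p n_) predT). Qed.

Lemma qformE (R : realFieldType) m (A : 'M[R]_m) (x : 'cV[R]_m) :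
  (x^T *m A *m x) ord0 ord0 = \sum_i \sum_j x i ord0 * A i j * x j ord0.
Proof.
rewrite mxE (eq_bigr (fun j => \sum_i x i ord0 * A i j * x j ord0)).
  by rewrite exchange_big.
move=> j _; rewrite mxE big_distrl /=.
by apply: eq_bigr => i _; rewrite !mxE.
Qed.

Lemma qdelta (R : realFieldType) m (d : 'I_m -> R) (M : 'I_m -> 'I_m -> R) (y : 'I_m -> R) :
  \sum_i \sum_j y i * ((i == j)%:R * d i + M i j) * y j =
  \sum_i d i * y i ^+ 2 + \sum_i \sum_j y i * M i j * y j.
Proof.
rewrite -big_split /=; apply: eq_bigr => i _.
rewrite (bigD1 i) //= [in RHS](bigD1 i) //= eqxx addrA; congr (_ + _).
  by rewrite /= mul1r; ring.
apply: eq_bigr => j /negPf ne; by rewrite eq_sym ne mul0r add0r.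
Qed.

Definition Mm (R : realFieldType) p (b : 'I_p -> R) (c : 'I_p -> 'I_p -> R) (k l : 'I_p) : R :=
  if k == l then b k else csym c k l.

Lemma BmatE (R : realFieldType) p (n_ : 'I_p -> nat) (b : 'I_p -> R) c s t :
  Bmat n_ b c s t = (s == t)%:R * (1 - b (@tagnat.sig1 p n_ s)) + Mm b c (tagnat.sig1 s) (tagnat.sig1 t).
Proof.
rewrite /Bmat /mxblock !mxE /Mm.
case: eqP => [e|ne].
  have -> : (tagnat.sig2 s == tagnat.sig2 t :> nat) = (s == t).
    have := tagnat.eq_Rank (tagnat.sig2 s) (tagnat.sig2 t).
    have ee : (tagnat.sig1 s == tagnat.sig1 t) = true by apply/eqP.
    by rewrite !tagnat.sig2K ee /= => <-.
  by case: eqP => _ /=; [rewrite e; ring| ring].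
have -> : (s == t) = false.
  by apply/eqP => st; apply: ne; rewrite st.
by rewrite mul0r add0r.
Qed.

Lemma sum_if (R : realFieldType) n (a : R) :
  \sum_(i < n) \sum_(j < n) (if (i : nat) == j then 1 else a) =
  n%:R * ((1 - a) + n%:R * a).
Proof.
transitivity (\sum_(i < n) ((1 - a) + n%:R * a)); last first.
  by rewrite sumr_const card_ord [RHS]mulr_natl.
apply: eq_bigr => i _.
rewrite (eq_bigr (fun j : 'I_n => (i == j)%:R * (1 - a) + a)); last first.
  move=> j _; have [->|ne] := eqVneq i j; first by rewrite !eqxx /= mul1r subrK.
  have ne1 : (i : nat) != j by [].
  by rewrite (negPf ne1) mul0r add0r.
rewrite big_split /= sumr_const card_ord -mulr_natl; congr (_ + _).
rewrite (bigD1 i) //= eqxx mul1r big1 ?addr0 // => j /negPf.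
by rewrite eq_sym => ->; rewrite mul0r.
by rewrite mulr1 mulr_natl.
Qed.

Lemma aux1 (R : realFieldType) (x a : R) : x != 0 ->
  (x * x)^-1 * (x * (1 - a + x * a)) = x^-1 + (x - 1) / x * a.
Proof. by move=> nx; field. Qed.

Lemma aux2 (R : realFieldType) (m n : nat) (a : R) : m%:R != 0 :> R -> n%:R != 0 :> R ->
  (m%:R * n%:R)^-1 * (a *+ n *+ m) = a.
Proof.
move=> nx ny.
have -> : a *+ n *+ m = (m%:R * n%:R) * a.
  by rewrite -mulrnA -natrM mulr_natl mulnC.
by rewrite mulrA mulVf ?mul1r // mulf_neq0.
Qed.

Lemma phiE (R : realFieldType) p (n_ : 'I_p -> nat) (b : 'I_p -> R) c
  (hn : forall k, (0 < n_ k)%N) :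
  phi n_ (Bmat n_ b c) =
    \matrix_(k, l) (if k == l then (n_ k)%:R^-1 + ((n_ k)%:R - 1) / (n_ k)%:R * b k
                    else csym c k l).
Proof.
apply/matrixP => k l; rewrite !mxE /Bmat mxblockK.
have nk : (n_ k)%:R != 0 :> R by rewrite pnatr_eq0 -lt0n hn.
have nl : (n_ l)%:R != 0 :> R by rewrite pnatr_eq0 -lt0n hn.
case: (eqVneq k l) => [<-|ne].
  under eq_bigr do under eq_bigr do rewrite mxE.
  rewrite sum_if; exact: (aux1 (b k) nk).
under eq_bigr do under eq_bigr do rewrite mxE.
rewrite sumr_const card_ord sumr_const card_ord.
exact: (aux2 (csym c k l) nk nl).
Qed.

Definition Sv (R : realFieldType) p (n_ : 'I_p -> nat) (x : 'cV[R]_(\sum_(k < p) n_ k)) : 'cV[R]_p :=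
  \col_k \sum_(s | tagnat.sig1 s == k) x s ord0.

Definition Qv (R : realFieldType) p (n_ : 'I_p -> nat) (x : 'cV[R]_(\sum_(k < p) n_ k)) (k : 'I_p) : R :=
  \sum_(s | tagnat.sig1 s == k) x s ord0 ^+ 2.

Lemma qA (R : realFieldType) p (n_ : 'I_p -> nat) (b : 'I_p -> R) c x :
  (x^T *m Bmat n_ b c *m x) ord0 ord0 =
  \sum_k (1 - b k) * Qv x k + \sum_k \sum_l Sv x k ord0 * Mm b c k l * Sv x l ord0.
Proof.
rewrite qformE.
under eq_bigr do under eq_bigr do rewrite BmatE.
rewrite qdelta; congr (_ + _).
  rewrite groupE; apply: eq_bigr => k _; rewrite /Qv big_distrr /=.
  by apply: eq_bigr => s /eqP ->.
rewrite groupE; apply: eq_bigr => k _.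
rewrite (eq_bigr (fun s => \sum_l \sum_(t | tagnat.sig1 t == l) x s ord0 * Mm b c (tagnat.sig1 s) (tagnat.sig1 t) * x t ord0)); last by move=> s _; exact: groupE.
rewrite exchange_big /=; apply: eq_bigr => l _.
rewrite !mxE -mulrA big_distrl /=; apply: eq_bigr => s /eqP ks.
rewrite mulrA big_distrr /=; apply: eq_bigr => t /eqP lt.
by rewrite ks lt.
Qed.
Lemma aux7 (R : realFieldType) (a Q S N : R) : a * Q = a / N * S + a * (Q - S / N).
Proof. ring. Qed.
Lemma aux4 (R : realFieldType) (Q S N : R) : N != 0 -> Q - 2 * (S / N) * S + (S / N) ^+ 2 * N = Q - S ^+ 2 / N.
Proof. by move=> h; field. Qed.
Lemma aux5 (R : realFieldType) (a N : R) : N != 0 -> (a / N) ^+ 2 * N = a ^+ 2 / N.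
Proof. by move=> h; field. Qed.
Lemma aux6 (R : realFieldType) (a b N : R) : a * (b / N) = a / N * b.
Proof. ring. Qed.
Lemma aux3 (R : realFieldType) (a N : R) : N != 0 -> N^-1 + (N - 1) / N * a = (1 - a) / N + a.
Proof. by move=> h; field. Qed.

Lemma CS (R : realFieldType) p (n_ : 'I_p -> nat) (x : 'cV[R]_(\sum_(k < p) n_ k)) k :
  (0 < n_ k)%N -> Sv x k ord0 ^+ 2 / (n_ k)%:R <= Qv x k.
Proof.
move=> hk; have nN : (n_ k)%:R != 0 :> R by rewrite pnatr_eq0 -lt0n.
set m := Sv x k ord0 / (n_ k)%:R.
have h : \sum_(s | tagnat.sig1 s == k) (x s ord0 - m) ^+ 2 =
    Qv x k - 2 * m * Sv x k ord0 + m ^+ 2 * (n_ k)%:R.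
  rewrite (eq_bigr (fun s => x s ord0 ^+ 2 + (- (2 * m)) * x s ord0 + m ^+ 2)); last first.
    by move=> s _; ring.
  rewrite !big_split /= -mulr_sumr cntE -[m ^+ 2 *+ _]mulr_natr /Qv /Sv mxE.
  ring.
have : 0 <= \sum_(s | tagnat.sig1 s == k) (x s ord0 - m) ^+ 2.
  by apply: sumr_ge0 => s _; exact: sqr_ge0.
by rewrite h /m (aux4 (Qv x k) (Sv x k ord0) nN) subr_ge0.
Qed.

Lemma qP (R : realFieldType) p (n_ : 'I_p -> nat) (b : 'I_p -> R) c (y : 'cV[R]_p)
  (hn : forall k, (0 < n_ k)%N) :
  (y^T *m (\matrix_(k, l) (if k == l then (n_ k)%:R^-1 + ((n_ k)%:R - 1) / (n_ k)%:R * b k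
                    else csym c k l)) *m y) ord0 ord0 =
  \sum_k (1 - b k) / (n_ k)%:R * y k ord0 ^+ 2 + \sum_k \sum_l y k ord0 * Mm b c k l * y l ord0.
Proof.
rewrite qformE.
rewrite (eq_bigr (fun k => \sum_l y k ord0 * ((k == l)%:R * ((1 - b k) / (n_ k)%:R) + Mm b c k l) * y l ord0)).
  exact: qdelta.
move=> k _; apply: eq_bigr => l _; rewrite mxE /Mm.
case: eqVneq => [<-|ne]; last by rewrite mul0r add0r.
have nN : (n_ k)%:R != 0 :> R by rewrite pnatr_eq0 -lt0n hn.
by rewrite mul1r (aux3 (b k) nN).
Qed.

Lemma csym_sym (R : Type) p (c : 'I_p -> 'I_p -> R) k l : csym c k l = csym c l k.
Proof.
rewrite /csym; case: (ltngtP k l) => // e.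
by have -> : k = l by apply: val_inj.
Qed.

Lemma Mm_sym (R : realFieldType) p (b : 'I_p -> R) c k l : Mm b c k l = Mm b c l k.
Proof.
rewrite /Mm eq_sym; case: eqVneq => [->|_] //; exact: csym_sym.
Qed.

Lemma Bmat_sym (R : realFieldType) p (n_ : 'I_p -> nat) (b : 'I_p -> R) c :
  (Bmat n_ b c)^T = Bmat n_ b c.
Proof.
apply/matrixP => s t; rewrite mxE !BmatE Mm_sym [t == s]eq_sym.
by case: (eqVneq s t) => [->|ne] //; rewrite !mul0r.

Qed.

Lemma Phi_sym (R : realFieldType) p (n_ : 'I_p -> nat) (b : 'I_p -> R) c :
  (\matrix_(k, l) (if k == l then (n_ k)%:R^-1 + ((n_ k)%:R - 1) / (n_ k)%:R * b k
                    else csym c k l))^T =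
  \matrix_(k, l) (if k == l then (n_ k)%:R^-1 + ((n_ k)%:R - 1) / (n_ k)%:R * b k
                    else csym c k l).
Proof.
apply/matrixP => k l; rewrite !mxE [l == k]eq_sym.
by case: (eqVneq k l) => [->|ne] //; rewrite csym_sym.
Qed.

Theorem theorem2 (R : realFieldType) (p : nat) (n_ : 'I_p -> nat)
    (b : 'I_p -> R) (c : 'I_p -> 'I_p -> R)
    (hp : (0 < p)%N)
    (hn : forall k, (0 < n_ k)%N)
    (hb : forall k, -1 < b k < 1)
    (hc : forall k l : 'I_p, (k < l)%N -> -1 < c k l < 1)
    (hb1 : forall k, n_ k = 1%N -> b k = 0) :
  phi n_ (Bmat n_ b c) =
    \matrix_(k, l) (if k == l then (n_ k)%:R^-1 + ((n_ k)%:R - 1) / (n_ k)%:R * b k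
                    else csym c k l)
  /\ (posdef (Bmat n_ b c) <-> posdef (phi n_ (Bmat n_ b c))).
Proof.
have E := phiE b c hn.
split; first exact: E.
rewrite E; split.
- case=> _ HA; split; first exact: Phi_sym.
  move=> y y0.
  pose x : 'cV[R]_(\sum_(k < p) n_ k) :=
    \col_s (y (tagnat.sig1 s) ord0 / (n_ (tagnat.sig1 s))%:R).
  have Sx : forall k, Sv x k ord0 = y k ord0.
    move=> k; rewrite /Sv mxE (eq_bigr (fun _ => y k ord0 / (n_ k)%:R)); last first.
      by move=> s /eqP <-; rewrite mxE.
    by rewrite cntE -[_ *+ n_ k]mulr_natr divfK // pnatr_eq0 -lt0n hn.
  have Qx : forall k, Qv x k = y k ord0 ^+ 2 / (n_ k)%:R.
    move=> k; rewrite /Qv (eq_bigr (fun _ => (y k ord0 / (n_ k)%:R) ^+ 2)); last first.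
      by move=> s /eqP <-; rewrite mxE.
    by rewrite cntE -[_ *+ n_ k]mulr_natr; apply: aux5; rewrite pnatr_eq0 -lt0n hn.
  have x0 : x != 0.
    apply: contra y0 => /eqP xz; apply/eqP/matrixP => k j.
    by rewrite ord1 -Sx xz /Sv !mxE; apply: big1 => s _; rewrite mxE.
  rewrite (qP b c y hn).
  have -> : \sum_k (1 - b k) / (n_ k)%:R * y k ord0 ^+ 2 +
      \sum_k \sum_l y k ord0 * Mm b c k l * y l ord0 =
      (x^T *m Bmat n_ b c *m x) ord0 ord0.
    rewrite qA; congr (_ + _).
      by apply: eq_bigr => k _; rewrite Qx (aux6 (1 - b k) (y k ord0 ^+ 2) (n_ k)%:R).
    by apply: eq_bigr => k _; apply: eq_bigr => l _; rewrite !Sx.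
  exact: HA.
- case=> _ HP; split; first exact: Bmat_sym.
  move=> x x0.
  have hbk : forall k, 0 < 1 - b k.
    by move=> k; case/andP: (hb k) => _ h; rewrite subr_gt0.
  have Qge : forall k, 0 <= Qv x k.
    by move=> k; apply: sumr_ge0 => s _; exact: sqr_ge0.
  rewrite qA.
  case: (eqVneq (Sv x) 0) => [S0|S0].
    rewrite [X in _ + X]big1 ?addr0; last first.
      by move=> k _; apply: big1 => l _; rewrite S0 !mxE !mul0r.
    have [s xs] : exists s, x s ord0 != 0.
      case: (pickP (fun s => x s ord0 != 0)) => [s xs|H]; first by exists s.
      move: x0; case/negP; apply/eqP/matrixP => i j; rewrite ord1 mxE.
      by move: (H i) => /negbFE/eqP.
    rewrite (bigD1 (tagnat.sig1 s)) //=.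
    have h1 : x s ord0 ^+ 2 <= Qv x (tagnat.sig1 s).
      by rewrite /Qv (bigD1 s) //= lerDl; apply: sumr_ge0 => t _; exact: sqr_ge0.
    have h2 : 0 < x s ord0 ^+ 2 by rewrite lt0r sqrf_eq0 xs sqr_ge0.
    have h3 : 0 <= \sum_(k | k != tagnat.sig1 s) (1 - b k) * Qv x k.
      by apply: sumr_ge0 => k _; apply: mulr_ge0; [exact: ltW | exact: Qge].
    have := hbk (tagnat.sig1 s); nra.
  have Hy := HP _ S0; rewrite qP // in Hy.
  have h : 0 <= \sum_k (1 - b k) * (Qv x k - Sv x k ord0 ^+ 2 / (n_ k)%:R).
    apply: sumr_ge0 => k _; apply: mulr_ge0; first exact: ltW.
    by rewrite subr_ge0; exact: CS.
  have -> : \sum_k (1 - b k) * Qv x k =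
      \sum_k (1 - b k) / (n_ k)%:R * Sv x k ord0 ^+ 2 +
      \sum_k (1 - b k) * (Qv x k - Sv x k ord0 ^+ 2 / (n_ k)%:R).
    by rewrite -big_split; apply: eq_bigr => k _; exact: aux7.
  lra.
Qed.
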